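(* Let $n,k\ge0$ be integers, $R\subseteq[0,k]$ and $R^c=[0,k]\setminus R$. Define $$\binom{n}{k,R}=\#\bigl\{\{s_1<s_2<\dots<s_k\}\subseteq[n] : s_{i+1}=s_i+1\text{ for all } i\in R\bigr\},$$ with the conventions $s_0=0$ and $s_{k+1}=n+1$. Then $$\binom{n}{k,R}=\sum_{\ell\ge0}(-1)^{\ell-k}\binom{\ell}{k,R^c}\binom{n}{\ell},$$ where $\binom{n}{\ell}$ is the ordinary binomial coefficient.
   Context: $[n]=\{1,\dots,n\}$ and $[0,k]=\{0,1,\dots,k\}$. *)

(* Defs.v *)
From HB Require Import structures.
From mathcomp Require Import all_boot all_order all_algebra.
Set Implicit Arguments. Unset Strict Implicit. Unset Printing Implicit Defensive.

(* For A ⊆ [n] (encoded as A : {set 'I_n}, element x representing x+1),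
   the extended sorted sequence s_0 = 0, s_1 < ... < s_k (elements of A), s_{k+1} = n+1. *)
Definition ext_seq (n : nat) (A : {set 'I_n}) : seq nat :=
  0 :: rcons (sort leq [seq (val x).+1 | x in A]) n.+1.

Definition binom_R (n k : nat) (R : {set 'I_k.+1}) : nat :=
  #|[set A : {set 'I_n} | (#|A| == k) &&
     [forall i : 'I_k.+1, (i \in R) ==>
        (nth 0 (ext_seq A) (val i).+1 == (nth 0 (ext_seq A) (val i)).+1)]]|.
Arguments binom_R n k R : clear implicits.

(* Main.v *)
Require Import Defs.
From mathcomp Require Import all_boot all_order all_algebra.
Import GRing.Theory Num.Theory.

Section Comb.
Variable n : nat.

Definition mv (A : {set 'I_n}) (i : nat) : bool := i \in [seq val x | x in A].
Definition lst (A : {set 'I_n}) : seq nat := [seq i.+1 | i <- iota 0 n & mv A i].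

Lemma mvP (A : {set 'I_n}) i : reflect (exists2 x, x \in A & i = val x) (mv A i).
Proof.
apply: (iffP mapP) => [[x]|[x xA ->]]; last by exists x; rewrite ?mem_enum.
by rewrite mem_enum => xA ->; exists x.
Qed.

Lemma sort_ext (A : {set 'I_n}) : sort leq [seq (val x).+1 | x in A] = lst A.
Proof.
have pe : perm_eq [seq (val x).+1 | x in A] (lst A).
  apply: uniq_perm.
  - rewrite map_inj_uniq ?enum_uniq // => x y /succn_inj; exact: val_inj.
  - by rewrite map_inj_uniq ?filter_uniq ?iota_uniq //; exact: succn_inj.
  - move=> y; apply/mapP/mapP => [[x]|[i]].
      rewrite mem_enum => xA ->; exists (val x) => //.
      by rewrite mem_filter mem_iota /= ltn_ord andbT; apply/mvP; exists x.
    rewrite mem_filter mem_iota => /andP[/mvP[x xA ->] _] ->.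
    by exists x; rewrite ?mem_enum.
rewrite (perm_sortP leq_total leq_trans anti_leq _ _ pe).
apply: sorted_sort; first exact: leq_trans.
rewrite sorted_map; apply: sorted_filter; first exact: leq_trans.
exact: iota_sorted.
Qed.

Lemma ext_seqE (A : {set 'I_n}) : ext_seq A = 0 :: rcons (lst A) n.+1.
Proof. by rewrite /ext_seq sort_ext. Qed.

Lemma size_lst (A : {set 'I_n}) : size (lst A) = #|A|.
Proof. by rewrite -sort_ext size_sort size_map -cardE. Qed.

Lemma lst_le (A : {set 'I_n}) : all (fun x => x <= n) (lst A).
Proof.
apply/allP => y /mapP[i]; rewrite mem_filter mem_iota => /andP[_ /andP[_ h]] ->.
by rewrite add0n in h.
Qed.

End Comb.
Arguments mv {n}.
Arguments lst {n}.
Arguments mvP {n}.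

Section Ext.
Variable n : nat.
Definition wd : 'I_n -> 'I_n.+1 := widen_ord (leqnSn n).
Definition ext0 (B : {set 'I_n}) : {set 'I_n.+1} := wd @: B.
Definition ext1 (B : {set 'I_n}) : {set 'I_n.+1} := ord_max |: ext0 B.
Definition shrink (A : {set 'I_n.+1}) : {set 'I_n} := [set i | wd i \in A].

Lemma wd_inj : injective wd.
Proof. by move=> x y /(congr1 val) /= /val_inj. Qed.

Lemma wd_max x : (wd x == ord_max) = false.
Proof. by apply/negbTE; rewrite -val_eqE /= neq_ltn ltn_ord. Qed.

Lemma ordS_case (x : 'I_n.+1) : x = ord_max \/ exists y, x = wd y.
Proof.
case: (ltnP x n) => h; first by right; exists (Ordinal h); apply: val_inj.
by left; apply: val_inj => /=; apply/eqP; rewrite eqn_leq h -ltnS ltn_ord.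
Qed.

Lemma mem_ext0 B y : (wd y \in ext0 B) = (y \in B).
Proof. by rewrite /ext0 (mem_imset _ _ wd_inj). Qed.

Lemma max_ext0 B : (ord_max \in ext0 B) = false.
Proof. by apply/negbTE/imsetP => -[x _ /eqP]; rewrite eq_sym wd_max. Qed.

Lemma shrink0 B : shrink (ext0 B) = B.
Proof. by apply/setP => x; rewrite inE mem_ext0. Qed.

Lemma shrink1 B : shrink (ext1 B) = B.
Proof. by apply/setP => x; rewrite !inE wd_max mem_ext0. Qed.

Lemma ext0_shrink (A : {set 'I_n.+1}) : ord_max \notin A -> ext0 (shrink A) = A.
Proof.
move=> hA; apply/setP => x; case: (ordS_case x) => [->|[y ->]].
  by rewrite max_ext0 (negbTE hA).
by rewrite mem_ext0 inE.
Qed.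

Lemma ext1_shrink (A : {set 'I_n.+1}) : ord_max \in A -> ext1 (shrink A) = A.
Proof.
move=> hA; apply/setP => x; case: (ordS_case x) => [->|[y ->]].
  by rewrite !inE eqxx.
by rewrite !inE wd_max mem_ext0 inE.
Qed.

Lemma mv_n (B : {set 'I_n}) : mv B n = false.
Proof. by apply/negbTE/mvP => -[x _ h]; move: (ltn_ord x); rewrite -h ltnn. Qed.

Lemma mv_ext0 B i : mv (ext0 B) i = mv B i.
Proof.
apply/mvP/mvP => [[x]|[x xB ->]]; last by exists (wd x); rewrite ?mem_ext0.
case: (ordS_case x) => [->|[y ->]]; first by rewrite max_ext0.
by rewrite mem_ext0 => yB ->; exists y.
Qed.

Lemma mv_ext1 B i : mv (ext1 B) i = (i == n) || mv B i.
Proof.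
rewrite /ext1; apply/mvP/orP => [[x]|].
  rewrite in_setU1 => /orP[/eqP-> ->|xB ->]; first by left.
  by right; rewrite -mv_ext0; apply/mvP; exists x.
case=> [/eqP->|]; first by exists ord_max; rewrite ?in_setU1 ?eqxx.
by rewrite -mv_ext0 => /mvP[x xB ->]; exists x; rewrite // in_setU1 xB orbT.
Qed.

Lemma iotaSr m : iota 0 m.+1 = rcons (iota 0 m) m.
Proof. by rewrite -addn1 iotaD cats1. Qed.

Lemma lst_ext0 B : lst (ext0 B) = lst B.
Proof.
rewrite /lst iotaSr filter_rcons mv_ext0 mv_n.
by congr map; apply: eq_filter => i; rewrite mv_ext0.
Qed.

Lemma lst_ext1 B : lst (ext1 B) = rcons (lst B) n.+1.
Proof.
rewrite /lst iotaSr filter_rcons mv_ext1 eqxx /= map_rcons.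
congr rcons; congr map; apply: eq_in_filter => i; rewrite mem_iota mv_ext1.
by rewrite add0n => /andP[_ /ltn_eqF ->].
Qed.

Lemma card_ext1 B : #|ext1 B| = #|B|.+1.
Proof. by rewrite -!size_lst lst_ext1 size_rcons. Qed.

Lemma card_ext0 B : #|ext0 B| = #|B|.
Proof. by rewrite -!size_lst lst_ext0. Qed.

Lemma card_split (P : pred {set 'I_n.+1}) :
  #|[set A | P A]| = #|[set B | P (ext0 B)]| + #|[set B | P (ext1 B)]|.
Proof.
rewrite -(cardsID [set A : {set 'I_n.+1} | ord_max \in A]) addnC.
have inj0 : injective ext0 by move=> x y /(congr1 shrink); rewrite !shrink0.
have inj1 : injective ext1 by move=> x y /(congr1 shrink); rewrite !shrink1.
congr addn.
  rewrite -(card_imset _ inj0); apply: eq_card => A; rewrite !inE.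
  apply/andP/imsetP => [[hm hP]|[B]]; last first.
    by rewrite inE => hB ->; rewrite max_ext0.
  by exists (shrink A); rewrite ?inE ext0_shrink.
rewrite -(card_imset _ inj1); apply: eq_card => A; rewrite !inE.
apply/andP/imsetP => [[hP hm]|[B]]; last first.
  by rewrite inE => hB ->; rewrite !inE eqxx.
by exists (shrink A); rewrite ?inE ext1_shrink.
Qed.
End Ext.
Arguments wd {n}. Arguments ext0 {n}. Arguments ext1 {n}. Arguments shrink {n}.
Arguments ordS_case {n}.

Definition cond k (R : {set 'I_k.+1}) (s : seq nat) :=
  [forall i : 'I_k.+1, (i \in R) ==> (nth 0 s i.+1 == (nth 0 s i).+1)].
Definition restr k (R : {set 'I_k.+2}) : {set 'I_k.+1} := [set i | wd i \in R].
Arguments cond {k}. Arguments restr {k}.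

Lemma binom_RE n k R :
  binom_R n k R = #|[set A : {set 'I_n} | (#|A| == k) && cond R (ext_seq A)]|.
Proof. by []. Qed.

Lemma forall_split k (Q : pred 'I_k.+1) :
  [forall i, Q i] = [forall i : 'I_k, Q (wd i)] && Q ord_max.
Proof.
apply/idP/andP => [/forallP h|[/forallP h hm]].
  by split; [apply/forallP=> i; exact: (h (wd i)) | exact: (h ord_max)].
apply/forallP => x.
by case: (ordS_case x) => [->|[y ->]]; [exact: hm | exact: h].
Qed.

Lemma nth_lst_eq (L : seq nat) a b j : j <= size L ->
  nth 0 (0 :: rcons L a) j = nth 0 (0 :: rcons L b) j.
Proof. by case: j => //= j h; rewrite !nth_rcons h. Qed.

Lemma nth_last_le (L : seq nat) a n : all (fun x => x <= n) L ->
  nth 0 (0 :: rcons L a) (size L) <= n.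
Proof.
move=> /allP hL; case hs: (size L) => [|j] //=.
by rewrite nth_rcons hs ltnSn; apply: hL; apply: mem_nth; rewrite hs.
Qed.

Lemma cond0 k (R : {set 'I_k.+1}) (L : seq nat) n :
  size L = k -> all (fun x => x <= n) L ->
  cond R (0 :: rcons L n.+2) = (ord_max \notin R) && cond R (0 :: rcons L n.+1).
Proof.
move=> hs hL; rewrite /cond !forall_split.
have -> : [forall i : 'I_k, (wd i \in R) ==>
            (nth 0 (0 :: rcons L n.+2) (wd i).+1 == (nth 0 (0 :: rcons L n.+2) (wd i)).+1)]
        = [forall i : 'I_k, (wd i \in R) ==>
            (nth 0 (0 :: rcons L n.+1) (wd i).+1 == (nth 0 (0 :: rcons L n.+1) (wd i)).+1)].
  apply: eq_forallb => i /=.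
  by rewrite !nth_rcons hs ltn_ord (nth_lst_eq _ n.+2 n.+1) // hs ltnW.
have hle := nth_last_le L n.+2 n hL; rewrite hs in hle.
have -> : (nth 0 (0 :: rcons L n.+2) (@ord_max k).+1 == (nth 0 (0 :: rcons L n.+2) (@ord_max k)).+1) = false.
  rewrite (_ : nth 0 (0 :: rcons L n.+2) (@ord_max k).+1 = n.+2); last first.
    by rewrite /= nth_rcons hs ltnn eqxx.
  apply/negbTE; rewrite eqSS neq_ltn; apply/orP; right; exact: hle.
by case: (ord_max \in R); rewrite /= ?andbT ?andbF.
Qed.

Lemma cond1 k (R : {set 'I_k.+2}) (s : seq nat) x :
  size s = k.+2 -> x = (nth 0 s k.+1).+1 ->
  cond R (rcons s x) = cond (restr R) s.
Proof.
move=> hs hx; rewrite /cond forall_split.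
have -> : (ord_max \in R) ==> (nth 0 (rcons s x) (@ord_max k.+1).+1
            == (nth 0 (rcons s x) (@ord_max k.+1)).+1).
  have e1 : nth 0 (rcons s x) k.+2 = x by rewrite nth_rcons hs ltnn eqxx.
  have e2 : nth 0 (rcons s x) k.+1 = nth 0 s k.+1 by rewrite nth_rcons hs ltnSn.
  by rewrite /= e1 e2 hx eqxx implybT.
rewrite andbT; apply: eq_forallb => i /=.
have h2 : i.+1 < k.+2 by rewrite ltnS.
have h1 : i < k.+2 by apply: ltnW.
by rewrite inE !nth_rcons hs h1 h2.
Qed.

Lemma binom_R0 k R : binom_R 0 k R = (k == 0%N).
Proof.
rewrite binom_RE.
have e : forall A : {set 'I_0}, A = set0 by move=> A; apply/setP => -[].
case: k R => [|k] R /=.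
  rewrite (_ : [set A : {set 'I_0} | _] = [set set0]) ?cards1 //.
  have hc : cond R (ext_seq (set0 : {set 'I_0})).
    by rewrite ext_seqE; apply/forallP => i; rewrite (ord1 i) /= eqxx implybT.
  by apply/setP => A; rewrite !inE (e A) cards0 !eqxx andTb hc.
apply/eqP; rewrite cards_eq0; apply/eqP/setP => A; rewrite !inE (e A) cards0.
by [].
Qed.

Lemma binom_R_first n k R :
  binom_R n.+1 k R = (ord_max \notin R) * binom_R n k R
    + #|[set B : {set 'I_n} | (#|ext1 B| == k) && cond R (ext_seq (ext1 B))]|.
Proof.
rewrite binom_RE card_split.
congr addn; rewrite binom_RE.
have eqc : forall B : {set 'I_n}, (#|ext0 B| == k) && cond R (ext_seq (ext0 B)) =
    (ord_max \notin R) && ((#|B| == k) && cond R (ext_seq B)).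
  move=> B; rewrite card_ext0; case: eqP => hk; last by rewrite !andbF.
  rewrite !ext_seqE lst_ext0 (@cond0 k R (lst B) n) ?size_lst ?lst_le //.
case hm: (ord_max \in R) => /=.
  rewrite mul0n; apply/eqP; rewrite cards_eq0; apply/eqP/setP => B.
  by rewrite !inE eqc hm.
by rewrite mul1n; apply: eq_card => B; rewrite !inE eqc hm.
Qed.

Lemma binom_R_S0 n R : binom_R n.+1 0 R = (ord_max \notin R) * binom_R n 0 R.
Proof.
rewrite binom_R_first (_ : #|_| = 0%N) ?addn0 //.
apply/eqP; rewrite cards_eq0; apply/eqP/setP => B.
by rewrite !inE card_ext1.
Qed.

Lemma binom_R_SS n k R :
  binom_R n.+1 k.+1 R = (ord_max \notin R) * binom_R n k.+1 R + binom_R n k (restr R).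
Proof.
rewrite binom_R_first binom_RE; congr addn; apply: eq_card => B; rewrite !inE.
rewrite card_ext1 eqSS !ext_seqE lst_ext1; case: eqP => hk //.
rewrite -rcons_cons (@cond1 k R (0 :: rcons (lst B) n.+1)) //.
  by rewrite /= size_rcons size_lst hk.
by rewrite /= nth_rcons size_lst hk ltnn eqxx.
Qed.

Lemma restrC k (R : {set 'I_k.+2}) : restr (~: R) = ~: restr R.
Proof. by apply/setP => i; rewrite !inE. Qed.

From mathcomp Require Import ring.
Local Open Scope ring_scope.

Definition G n k (R : {set 'I_k.+1}) N : int :=
  \sum_(l < N.+1) (-1 : int) ^ ((l%:Z) - (k%:Z)) * (binom_R l k (~: R))%:Z * ('C(n, l))%:Z.

Lemma sgnS (l k : nat) : (-1 : int) ^ ((l.+1)%:Z - k%:Z) = - (-1) ^ (l%:Z - k%:Z).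
Proof.
have -> : (l.+1)%:Z - k%:Z = (l%:Z - k%:Z) + 1 by rewrite -addn1 PoszD; ring.
by rewrite exprzDr ?unitrN1 // expr1z mulrN1.
Qed.

Lemma sgnkS (l k : nat) : (-1 : int) ^ (l%:Z - (k.+1)%:Z) = - (-1) ^ (l%:Z - k%:Z).
Proof.
have -> : l%:Z - (k.+1)%:Z = (l%:Z - k%:Z) + (-1) by rewrite -addn1 PoszD; ring.
by rewrite exprzDr ?unitrN1 // exprN1 invrN1 mulrN1.
Qed.

Lemma pascal_sum n k (R : {set 'I_k.+1}) N :
  G n.+1 k R N.+1 = G n k R N.+1 +
  \sum_(l < N.+1) (-1 : int) ^ ((l.+1%:Z) - (k%:Z)) * (binom_R l.+1 k (~: R))%:Z * ('C(n, l))%:Z.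
Proof.
rewrite /G big_ord_recl [in RHS]big_ord_recl !bin0 -addrA; congr (_ + _).
rewrite -big_split; apply: eq_bigr => i _ /=.
rewrite binS PoszD; ring.
Qed.

Lemma notinC k (R : {set 'I_k.+1}) : (ord_max \notin ~: R) = (ord_max \in R).
Proof. by rewrite inE negbK. Qed.

Lemma main_gen n : forall k (R : {set 'I_k.+1}) N, (n <= N)%N ->
  (binom_R n k R)%:Z = G n k R N.
Proof.
elim: n => [|n IH] k R N hN.
  rewrite /G big_ord_recl big1 ?addr0; last first.
    by move=> i _; rewrite bin0n /= mulr0.
  rewrite bin0 !binom_R0 mulr1; case: k R => [|k] R //=.
  by rewrite mulr0.
case: N hN => [//|N] hN.
rewrite pascal_sum -(IH k R N.+1) ?(ltnW hN) //.
case: k R => [|k] R.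
  rewrite binom_R_S0 PoszM.
  have -> : \sum_(l < N.+1) (-1 : int) ^ ((l.+1%:Z) - (0%N%:Z)) *
      (binom_R l.+1 0 (~: R))%:Z * ('C(n, l))%:Z =
      - ((ord_max \in R) : nat)%:Z * G n 0 R N.
    rewrite /G big_distrr; apply: eq_bigr => i _ /=.
    rewrite sgnS binom_R_S0 notinC PoszM; ring.
  rewrite -(IH 0%N R N hN).
  by case: (ord_max \in R) => /=; ring.
rewrite binom_R_SS PoszD PoszM.
have -> : \sum_(l < N.+1) (-1 : int) ^ ((l.+1%:Z) - (k.+1%:Z)) *
      (binom_R l.+1 k.+1 (~: R))%:Z * ('C(n, l))%:Z =
      - ((ord_max \in R) : nat)%:Z * G n k.+1 R N + G n k (restr R) N.
  rewrite /G big_distrr -big_split; apply: eq_bigr => i _ /=.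
  rewrite sgnS binom_R_SS notinC restrC PoszD PoszM sgnkS; ring.
rewrite -(IH k.+1 R N hN) -(IH k (restr R) N hN).
by case: (ord_max \in R) => /=; ring.
Qed.

Theorem mainTheorem9 (n k : nat) (R : {set 'I_k.+1}) (N : nat) (hN : (n <= N)%N) :
  (binom_R n k R)%:Z =
  \sum_(l < N.+1) (-1 : int) ^ ((l%:Z) - (k%:Z)) * (binom_R l k (~: R))%:Z * ('C(n, l))%:Z.
Proof. exact: main_gen. Qed.
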